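(* Let $f:X\to X$ be a continuous map on a metric space $(X,d)$. The following are equivalent: (i) $(\mathcal{K}(X),\overline f)$ has the specification property; (ii) $(\mathcal{F}_\infty(X),\hat f)$ has the specification property; (iii) $(\mathcal{F}_0(X),\hat f)$ has the specification property; (iv) $(\mathcal{F}_S(X),\hat f)$ has the specification property; (v) $(\mathcal{F}_E(X),\hat f)$ has the specification property.
   Context: A continuous map $g$ on a metric space $(Y,\rho)$ has the specification property if for every $\varepsilon>0$ there is $N_\varepsilon\in\mathbb{N}$ such that for every integer $s\ge2$, every $y_1,\dots,y_s\in Y$ and every integers $0=i_1\le j_1<i_2\le j_2<\dots<i_s\le j_s$ with $i_{r+1}-j_r\ge N_\varepsilon$ for $1\le r<s$, there is $x\in Y$ with $\rho(g^j(x),g^j(y_r))<\varepsilon$ for all $1\le r\le s$ and $i_r\le j\le j_r$, and $g^{N_\varepsilon+j_s}(x)=x$. $\mathbb{I}=[0,1]$. Fuzzy setting: for $u:X\to\mathbb{I}$, $u_\alpha=\{x:u(x)\ge\alpha\}$ ($\alpha\in]0,1]$), $u_0=\overline{\{x:u(x)>0\}}$. $\mathcal{F}(X)$: upper-semicontinuous $u:X\to\mathbb{I}$ with $u_0$ compact and $u_1\ne\varnothing$. $\mathcal{K}(X)$: non-empty compact subsets with Hausdorff metric $d_H$; $\overline f(K)=f(K)$. Zadeh extension: $\hat f(u)(x)=\sup\{u(y):f(y)=x\}$ (and $0$ if $f^{-1}(\{x\})=\varnothing$). Metrics on $\mathcal{F}(X)$: $d_\infty(u,v)=\sup_{\alpha\in\mathbb{I}}d_H(u_\alpha,v_\alpha)$;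 $d_0(u,v)=\inf\{\varepsilon>0:\exists\xi\in\mathcal{T},\ \sup_\alpha|\xi(\alpha)-\alpha|\le\varepsilon,\ d_\infty(u,\xi\circ v)\le\varepsilon\}$ with $\mathcal{T}$ the strictly increasing homeomorphisms of $\mathbb{I}$; with $\overline d((x,\alpha),(y,\beta))=\max\{d(x,y),|\alpha-\beta|\}$, $\operatorname{end}(u)=\{(x,\alpha):u(x)\ge\alpha\}$, $\operatorname{send}(u)=\operatorname{end}(u)\cap(u_0\times\mathbb{I})$, $d_E$ and $d_S$ are the $\overline d$-Hausdorff distances of endographs and sendographs respectively. $\mathcal{F}_\rho(X)$ denotes $(\mathcal{F}(X),\rho)$. *)

(* Defs.v *)
From HB Require Import structures.
From mathcomp Require Import all_boot all_order all_algebra.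
From mathcomp Require Import boolp classical_sets reals ereal.
Set Implicit Arguments. Unset Strict Implicit. Unset Printing Implicit Defensive.
Import Order.TTheory GRing.Theory Num.Theory.
Local Open Scope classical_set_scope.
Local Open Scope ring_scope.

Section Defs.
Variable R : realType.

Definition is_metric {X : Type} (d : X -> X -> R) : Prop :=
  (forall x y, 0 <= d x y) /\ (forall x y, d x y = 0 <-> x = y) /\
  (forall x y, d x y = d y x) /\ (forall x y z, d x z <= d x y + d y z).

Definition dcontinuous {X : Type} (d : X -> X -> R) (f : X -> X) : Prop :=
  forall x (e : R), 0 < e -> exists r : R, 0 < r /\
    forall y, d x y < r -> d (f x) (f y) < e.

Definition dopen {X : Type} (d : X -> X -> R) (U : set X) : Prop :=
  forall x, U x -> exists r : R, 0 < r /\ forall y, d x y < r -> U y.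

Definition dcompact {X : Type} (d : X -> X -> R) (K : set X) : Prop :=
  forall (I : Type) (U : I -> set X), (forall i, dopen d (U i)) ->
    (forall x, K x -> exists i, U i x) ->
    exists (n : nat) (g : nat -> I), forall x, K x -> exists k, (k < n)%N /\ U (g k) x.

Definition dclosure {X : Type} (d : X -> X -> R) (S : set X) : set X :=
  [set x | forall e : R, 0 < e -> exists y, S y /\ d x y < e].

Definition hausdorff {T : Type} (dist : T -> T -> R) (A B : set T) : \bar R :=
  maxe (ereal_sup [set ereal_inf [set (dist a b)%:E | b in B] | a in A])
       (ereal_sup [set ereal_inf [set (dist a b)%:E | a in A] | b in B]).

Definition inK {X : Type} (d : X -> X -> R) : set (set X) :=
  [set K | K !=set0 /\ dcompact d K].

Definition image_map {X : Type} (f : X -> X) : set X -> set X := fun K => f @` K.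

Definition usc {X : Type} (d : X -> X -> R) (u : X -> R) : Prop :=
  forall x (t : R), u x < t -> exists r : R, 0 < r /\ forall y, d x y < r -> u y < t.

Definition level {X : Type} (d : X -> X -> R) (u : X -> R) (a : R) : set X :=
  if 0 < a then [set x | a <= u x] else dclosure d [set x | 0 < u x].

Definition inF {X : Type} (d : X -> X -> R) : set (X -> R) :=
  [set u | (forall x, 0 <= u x <= 1) /\ usc d u /\ dcompact d (level d u 0)
           /\ level d u 1 !=set0].

Definition zadeh {X : Type} (f : X -> X) (u : X -> R) : X -> R :=
  fun x => if `[< exists y, f y = x >] then sup [set u y | y in [set y | f y = x]]
           else 0.

Definition inI : set R := [set a | 0 <= a <= 1].

Definition d_inf {X : Type} (d : X -> X -> R) (u v : X -> R) : \bar R :=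
  ereal_sup [set hausdorff d (level d u a) (level d v a) | a in inI].

(* strictly increasing homeomorphisms of I (as maps R -> R, restricted to I) *)
Definition homeoI (xi : R -> R) : Prop :=
  (forall a b, 0 <= a -> a < b -> b <= 1 -> xi a < xi b) /\
  (forall a, inI a -> inI (xi a)) /\
  (forall b, inI b -> exists a, inI a /\ xi a = b) /\
  (forall a, inI a -> forall e : R, 0 < e -> exists r : R, 0 < r /\
      forall b, inI b -> `|a - b| < r -> `|xi a - xi b| < e) /\
  (exists xi' : R -> R, (forall a, inI a -> inI (xi' a) /\ xi' (xi a) = a /\ xi (xi' a) = a) /\
      forall a, inI a -> forall e : R, 0 < e -> exists r : R, 0 < r /\
      forall b, inI b -> `|a - b| < r -> `|xi' a - xi' b| < e).

Definition d_0 {X : Type} (d : X -> X -> R) (u v : X -> R) : \bar R :=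
  ereal_inf [set e%:E | e in [set e : R | 0 < e /\ exists xi, homeoI xi /\
     (ereal_sup [set `|xi a - a|%:E | a in inI] <= e%:E)%E /\
     (d_inf d u (xi \o v) <= e%:E)%E]].

Definition dbar {X : Type} (d : X -> X -> R) (p q : X * R) : R :=
  Num.max (d p.1 q.1) `|p.2 - q.2|.

Definition endo {X : Type} (u : X -> R) : set (X * R) :=
  [set p | inI p.2 /\ p.2 <= u p.1].

Definition sendo {X : Type} (d : X -> X -> R) (u : X -> R) : set (X * R) :=
  [set p | endo u p /\ level d u 0 p.1].

Definition d_E {X : Type} (d : X -> X -> R) (u v : X -> R) : \bar R :=
  hausdorff (dbar d) (endo u) (endo v).

Definition d_S {X : Type} (d : X -> X -> R) (u v : X -> R) : \bar R :=
  hausdorff (dbar d) (sendo d u) (sendo d v).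

(* ---------- specification property on (P, rho) for g ----------
   points y_1..y_s are y 0 .. y (s-1); times i_r, j_r are i (r-1), j (r-1) *)
Definition spec_prop {Y : Type} (P : set Y) (rho : Y -> Y -> \bar R) (g : Y -> Y) : Prop :=
  forall eps : R, 0 < eps -> exists N : nat,
    forall (s : nat) (y : nat -> Y) (i j : nat -> nat),
      (2 <= s)%N -> (forall r, (r < s)%N -> P (y r)) ->
      i 0%N = 0%N -> (forall r, (r < s)%N -> (i r <= j r)%N) ->
      (forall r, (r.+1 < s)%N -> (j r < i r.+1)%N /\ (N <= i r.+1 - j r)%N) ->
      exists x, P x /\
        (forall r k, (r < s)%N -> (i r <= k <= j r)%N ->
            (rho (iter k g x) (iter k g (y r)) < eps%:E)%E) /\
        iter (N + j s.-1) g x = x.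

End Defs.

(* Main.v *)
Require Import Defs.
From HB Require Import structures.
From mathcomp Require Import all_boot all_order all_algebra.
From mathcomp Require Import boolp classical_sets reals ereal.
From mathcomp Require Import lra.
Set Implicit Arguments. Unset Strict Implicit. Unset Printing Implicit Defensive.
Import Order.TTheory GRing.Theory Num.Theory.
Local Open Scope classical_set_scope.
Local Open Scope ring_scope.


Section FinMin.
Variable R : realType.

Lemma fin_min (n : nat) (Q : nat -> R -> Prop) :
  (forall k, (k < n)%N -> exists r, 0 < r /\ forall r', 0 < r' -> r' <= r -> Q k r') ->
  exists m, 0 < m /\ forall k, (k < n)%N -> forall r', 0 < r' -> r' <= m -> Q k r'.
Proof.
elim: n => [|n IH] H; first by exists 1; split => // k.
have [m [m0 Hm]] := IH (fun k kn => H k (leqW kn)).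
have [r [r0 Hr]] := H n (ltnSn n).
exists (Num.min m r); split; first by rewrite lt_min m0 r0.
move=> k; rewrite ltnS leq_eqVlt => /orP [/eqP ->|kn] r' r'0; rewrite le_min => /andP [h1 h2].
  by apply: Hr.
by apply: Hm.
Qed.

Lemma fin_max (n : nat) (a : R) (Q : nat -> R -> Prop) :
  (forall k, (k < n)%N -> exists t, t < a /\ forall t', t <= t' -> Q k t') ->
  exists T, T < a /\ forall k, (k < n)%N -> forall t', T <= t' -> Q k t'.
Proof.
elim: n => [|n IH] H; first by exists (a - 1); split => //; lra.
have [m [m0 Hm]] := IH (fun k kn => H k (leqW kn)).
have [r [r0 Hr]] := H n (ltnSn n).
exists (Num.max m r); split; first by rewrite gt_max m0 r0.
move=> k; rewrite ltnS leq_eqVlt => /orP [/eqP ->|kn] r'; rewrite ge_max => /andP [h1 h2].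
  by apply: Hr.
by apply: Hm.
Qed.
End FinMin.

Section Metric.
Variables (R : realType) (X : Type) (d : X -> X -> R).
Hypothesis Hm : is_metric d.

Lemma d_ge0 x y : 0 <= d x y. Proof. by case: Hm. Qed.
Lemma d_xx x : d x x = 0. Proof. by case: Hm => _ [H _]; apply/H. Qed.
Lemma d_eq0 x y : d x y = 0 -> x = y. Proof. by case: Hm => _ [H _] /H. Qed.
Lemma d_sym x y : d x y = d y x. Proof. by case: Hm => _ [_ []]. Qed.
Lemma d_tri x y z : d x z <= d x y + d y z. Proof. by case: Hm => _ [_ [_]]. Qed.

Lemma ball_open x r : dopen d [set y | d x y < r].
Proof.
move=> y /= hy; exists (r - d x y); split; first by rewrite subr_gt0.
move=> z hz; have := d_tri x y z; lra.
Qed.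

Lemma dopen0 : dopen d set0. Proof. by move=> x. Qed.

Lemma dcompact_ext (A B : set X) : (forall x, A x <-> B x) -> dcompact d A -> dcompact d B.
Proof.
move=> AB HA I U Uo cov.
have [n [g Hg]] := HA I U Uo (fun x Ax => cov x (proj1 (AB x) Ax)).
by exists n, g => x /AB /Hg.
Qed.

Lemma dcompactU (A B : set X) : dcompact d A -> dcompact d B -> dcompact d (A `|` B).
Proof.
move=> HA HB I U Uo cov.
have [n1 [g1 H1]] := HA I U Uo (fun x Ax => cov x (or_introl Ax)).
have [n2 [g2 H2]] := HB I U Uo (fun x Bx => cov x (or_intror Bx)).
exists (n1 + n2)%N, (fun k => if (k < n1)%N then g1 k else g2 (k - n1)%N).
move=> x [/H1 [k [kn Uk]]|/H2 [k [kn Uk]]].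
  by exists k; rewrite kn; split => //; apply: ltn_addr.
exists (n1 + k)%N.
have -> : (n1 + k < n1)%N = false by rewrite ltnNge leq_addr.
rewrite addKn; split => //.
by rewrite ltn_add2l.
Qed.

Definition BU (G : seq R) (P : R -> Prop) (C : R -> set X) : set X :=
  [set x | exists g, g \in G /\ P g /\ C g x].

Lemma compact_BU G P C : (exists g, g \in G /\ P g) ->
  (forall g, g \in G -> P g -> dcompact d (C g)) -> dcompact d (BU G P C).
Proof.
elim: G => [|a G IH] [g [gG Pg]] HC; first by rewrite in_nil in gG.
have HC' : forall g, g \in G -> P g -> dcompact d (C g).
  by move=> h hG; apply: HC; rewrite in_cons hG orbT.
case: (EM (exists g, g \in G /\ P g)) => [ex|nex].
  have HR := IH ex HC'.
  case: (EM (P a)) => Pa.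
    apply: (@dcompact_ext (C a `|` BU G P C)); last first.
      by apply: dcompactU => //; apply: HC => //; rewrite in_cons eqxx.
    move=> x; split.
      case=> [Cx|[h [hG [Ph Ch]]]]; first by exists a; rewrite in_cons eqxx.
      by exists h; rewrite in_cons hG orbT.
    case=> h [/[!in_cons] /orP [/eqP ->|hG] [Ph Ch]]; first by left.
    by right; exists h.
  apply: (dcompact_ext _ HR) => x; split; first by case=> h [hG [Ph Ch]]; exists h; rewrite in_cons hG orbT.
  case=> h [/[!in_cons] /orP [/eqP ->|hG] [Ph Ch]] //.
  by exists h.
have Pa : P a.
  move: gG; rewrite in_cons => /orP [/eqP <- //|gG]; by exfalso; apply: nex; exists g.
apply: (@dcompact_ext (C a)); last by apply: HC => //; rewrite in_cons eqxx.
move=> x; split; first by move=> Cx; exists a; rewrite in_cons eqxx.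
case=> h [/[!in_cons] /orP [/eqP ->|hG] [Ph Ch]] //.
by exfalso; apply: nex; exists h.
Qed.

Lemma dclosure_sub (A : set X) : A `<=` dclosure d A.
Proof. by move=> x Ax e e0; exists x; rewrite d_xx. Qed.

Lemma dclosure_mono (A B : set X) : A `<=` B -> dclosure d A `<=` dclosure d B.
Proof. by move=> AB x Hx e e0; have [y [Ay dy]] := Hx e e0; exists y; split => //; apply: AB. Qed.

Lemma dclosure_idem (A : set X) : dclosure d (dclosure d A) `<=` dclosure d A.
Proof.
move=> x Hx e e0.
have [y [Hy dy]] := Hx (e / 2) ltac:(lra).
have [z [Az dz]] := Hy (e / 2) ltac:(lra).
exists z; split => //; have := d_tri x y z; lra.
Qed.

Lemma not_closure (A : set X) x : ~ dclosure d A x ->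
  exists r, 0 < r /\ forall y, d x y < r -> ~ A y.
Proof.
move=> nx; apply: contrapT => H; apply: nx => e e0.
apply: contrapT => H2; apply: H; exists e; split => // y dy Ay; apply: H2.
by exists y.
Qed.

Lemma dcompact_closed (K : set X) : dcompact d K -> dclosure d K `<=` K.
Proof.
move=> HK x Hx; apply: contrapT => nK.
have dpos : forall z, K z -> 0 < d z x.
  move=> z Kz; have : d z x <> 0 by move=> /d_eq0 zx; apply: nK; rewrite -zx.
  have := d_ge0 z x; lra.
pose U := fun z : X => [set w | K z /\ d z x / 2 < d w x].
have Uo : forall z, dopen d (U z).
  move=> z w /= [Kz hw]; exists (d w x - d z x / 2); split; first lra.
  move=> v hv; split => //; have := d_tri w v x; lra.
have cov : forall w, K w -> exists z, U z w.
  by move=> w Kw; exists w; split => //; have := dpos w Kw; lra.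
have [n [g Hg]] := HK X U Uo cov.
have [m [m0 Hmin]] := @fin_min R n (fun k r => K (g k) -> r <= d (g k) x / 2)
  (fun k _ => ltac:(case: (EM (K (g k))) => Kg;
     [exists (d (g k) x / 2); split; [have := dpos _ Kg; lra | move=> r' _ h _; lra]
     |exists 1; split => // r' _ _ /Kg []])).
have [y [Ky dy]] := Hx m m0.
have [k [kn [Kg Uk]]] := Hg y Ky.
have := Hmin k kn m m0 (lexx m) Kg; have := d_sym x y; lra.
Qed.

Lemma closed_sub_compact (K C : set X) : dcompact d K -> C `<=` K ->
  dclosure d C `<=` C -> C !=set0 -> dcompact d C.
Proof.
move=> HK CK Ccl [c0 Cc0] I U Uo cov.
have [i0 _] := cov c0 Cc0.
pose V := fun o : option I => match o with Some i => U i | None => ~` C end.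
have Vo : forall o, dopen d (V o).
  case=> [i|]; first exact: Uo.
  move=> x /= nCx; have : ~ dclosure d C x by move=> /Ccl.
  by move=> /not_closure [r [r0 Hr]]; exists r; split.
have cov' : forall x, K x -> exists o, V o x.
  move=> x Kx; case: (EM (C x)) => Cx; last by exists None.
  by have [i Ui] := cov x Cx; exists (Some i).
have [n [g Hg]] := HK _ V Vo cov'.
exists n, (fun k => if g k is Some i then i else i0).
move=> x Cx; have [k [kn Vk]] := Hg x (CK x Cx).
by exists k; split => //; move: Vk; case: (g k).
Qed.

Lemma closed_not (C : set X) x : dclosure d C `<=` C -> ~ C x ->
  exists r, 0 < r /\ forall y, d x y < r -> ~ C y.
Proof. by move=> Ccl nCx; apply: not_closure => /Ccl. Qed.

Section Cont.
Variable f : X -> X.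
Hypothesis fc : dcontinuous d f.

Lemma dcompact_image (K : set X) : dcompact d K -> dcompact d (f @` K).
Proof.
move=> HK I U Uo cov.
pose V := fun i => [set x | U i (f x)].
have Vo : forall i, dopen d (V i).
  move=> i x /= Ux; have [r [r0 Hr]] := Uo i (f x) Ux.
  have [s [s0 Hs]] := fc x r0.
  by exists s; split => // y /Hs /Hr.
have [n [g Hg]] := HK I V Vo (fun x Kx => cov (f x) (ex_intro2 _ _ x Kx erefl)).
by exists n, g => _ [x Kx <-]; apply: Hg.
Qed.

Lemma closure_image (A : set X) : f @` dclosure d A `<=` dclosure d (f @` A).
Proof.
move=> _ [x Hx <-] e e0; have [s [s0 Hs]] := fc x e0.
have [y [Ay dy]] := Hx s s0.
by exists (f y); split; [exists y | apply: Hs].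
Qed.

End Cont.
End Metric.


Section Fuzzy.
Variables (R : realType) (X : Type) (d : X -> X -> R).
Hypothesis Hm : is_metric d.

Lemma levelE (u : X -> R) a : 0 < a -> level d u a = [set x | a <= u x].
Proof. by rewrite /level => ->. Qed.
Lemma level0E (u : X -> R) : level d u 0 = dclosure d [set x | 0 < u x].
Proof. by rewrite /level ltxx. Qed.

Lemma lev_sub0 (u : X -> R) a : 0 < a -> level d u a `<=` level d u 0.
Proof.
move=> a0 x; rewrite levelE // level0E /= => ax.
by apply: (dclosure_sub Hm); rewrite /=; lra.
Qed.

Lemma lev_mono (u : X -> R) a b : 0 <= a -> a <= b -> level d u b `<=` level d u a.
Proof.
move=> a0 ab; case: (ltrP 0 a) => a0'.
  by rewrite !levelE //= ?(lt_le_trans a0' ab) // => x; apply: le_trans.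
have -> : a = 0 by apply/eqP; rewrite eq_le a0 a0'.
case: (ltrP 0 b) => b0; first exact: lev_sub0.
by have -> : b = 0 by apply/eqP; rewrite eq_le b0; apply: (le_trans a0 ab).
Qed.

Lemma lev_closed (u : X -> R) a : usc d u -> dclosure d (level d u a) `<=` level d u a.
Proof.
move=> uu; case: (ltrP 0 a) => a0; last first.
  by rewrite /level ltNge a0 /=; apply: dclosure_idem.
rewrite levelE // => x Hx /=; apply: contrapT => /negP; rewrite -ltNge => xa.
have [r [r0 Hr]] := uu x a xa.
have [y [ay dy]] := Hx r r0.
by have := Hr y dy; move: ay => /= ; lra.
Qed.

Lemma inF_bnd u : inF d u -> forall x, 0 <= u x <= 1. Proof. by case. Qed.
Lemma inF_usc u : inF d u -> usc d u. Proof. by case=> _ []. Qed.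
Lemma inF_c0 u : inF d u -> dcompact d (level d u 0). Proof. by case=> _ [_ []]. Qed.
Lemma inF_ne1 u : inF d u -> level d u 1 !=set0. Proof. by case=> _ [_ []]. Qed.

Lemma lev_ne u a : inF d u -> inI a -> level d u a !=set0.
Proof.
move=> uF /andP [a0 a1]; have [x Hx] := inF_ne1 uF.
by exists x; apply: (lev_mono a0 a1).
Qed.

Lemma lev_compact u a : inF d u -> inI a -> dcompact d (level d u a).
Proof.
move=> uF aI.
have H1 : level d u a `<=` level d u 0 by case/andP: aI => a0 _; apply: lev_mono.
have H2 := @lev_closed u a (inF_usc uF).
exact (closed_sub_compact (inF_c0 uF) H1 H2 (lev_ne uF aI)).
Qed.

Section Zadeh.
Variable f : X -> X.
Hypothesis fc : dcontinuous d f.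

Lemma zadeh_ge (u : X -> R) x : (forall x, u x <= 1) -> u x <= zadeh f u (f x).
Proof.
move=> u1; rewrite /zadeh; case: asboolP => [_|[]]; last by exists x.
apply: ub_le_sup; first by exists 1 => _ [y _ <-].
by exists x.
Qed.

Lemma zadeh_lt (u : X -> R) y t : 0 <= t -> t < zadeh f u y -> exists x, f x = y /\ t < u x.
Proof.
move=> t0; rewrite /zadeh; case: asboolP => [[x0 fx0]|_]; last by lra.
move=> ht; apply: contrapT => H.
have : sup [set u y0 | y0 in [set y0 | f y0 = y]] <= t.
  apply: ge_sup; first by exists (u x0), x0.
  move=> _ [x fx <-]; rewrite leNgt; apply/negP => tx; apply: H.
  by exists x.
lra.
Qed.

Lemma zadeh_bnd (u : X -> R) : (forall x, 0 <= u x <= 1) -> forall y, 0 <= zadeh f u y <= 1.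
Proof.
move=> ub y; rewrite /zadeh; case: asboolP => [[x0 fx0]|_]; last by rewrite lexx ler01.
apply/andP; split.
  apply: (le_trans (proj1 (andP (ub x0)))); apply: ub_le_sup; last by exists x0.
  by exists 1 => _ [z _ <-]; case/andP: (ub z).
apply: ge_sup; first by exists (u x0), x0.
by move=> _ [z _ <-]; case/andP: (ub z).
Qed.

Lemma zadeh_level (u : X -> R) a : inF d u -> 0 < a ->
  level d (zadeh f u) a = f @` level d u a.
Proof.
move=> uF a0; have ub := inF_bnd uF.
rewrite !levelE //; apply: funext => y; apply: propext; split; last first.
  case=> x /= ax <-; apply: (le_trans ax); apply: zadeh_ge => z; by case/andP: (ub z).
rewrite /= => ha; apply: contrapT => H.
pose good := fun (x : X) (r : R) => (f x = y /\ u x < a /\ forall z, d x z < r -> u z < (u x + a) / 2)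
   \/ (f x <> y /\ forall z, d x z < r -> f z <> y).
pose U := fun p : X * R => [set z | 0 < p.2 /\ good p.1 p.2 /\ d p.1 z < p.2].
have Uo : forall p, dopen d (U p).
  move=> [x r] z [/= r0 [gd dz]]; simpl in gd, dz; exists (r - d x z); split; first by rewrite subr_gt0.
  move=> w dw; split => //; split => //=; have := d_tri Hm x z w; lra.
have cov : forall x, level d u 0 x -> exists p, U p x.
  move=> x _; case: (EM (f x = y)) => fxy.
    have uxa : u x < a by rewrite ltNge; apply/negP => ax; apply: H; exists x.
    have uu := inF_usc uF; have [r [r0 Hr]] := uu x ((u x + a) / 2) ltac:(lra).
    by exists (x, r); split => //=; rewrite d_xx //; split => //; left.
  have e0 : 0 < d (f x) y.
    have : d (f x) y <> 0 by move=> /(d_eq0 Hm).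
    have := d_ge0 Hm (f x) y; lra.
  have [r [r0 Hr]] := fc x e0.
  exists (x, r); split => //=; rewrite d_xx //; split => //; right; split => //.
  by move=> z dz fzy; have := Hr z dz; rewrite fzy; lra.
have [n [g Hg]] := inF_c0 uF Uo cov.
have loc : forall p, exists t, t < a /\ forall t', t <= t' -> forall z, U p z -> f z = y -> u z < t'.
  move=> [x r]; case: (EM (f x = y /\ u x < a /\ forall z, d x z < r -> u z < (u x + a) / 2)) => G1.
    exists ((u x + a) / 2); split; first by case: G1 => _ []; lra.
    move=> t' ht z /= [_ [_ dz]] _; case: G1 => _ [_ /(_ z dz)]; lra.
  exists 0; split => // t' _ z /= [_ [[G2|[nf Hnf]] dz]] fz; first by exfalso; apply: G1.
  by exfalso; apply: (Hnf z dz).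
have [T [Ta HT]] := @fin_max R n a (fun k T => forall z, U (g k) z -> f z = y -> u z < T)
  (fun k _ => loc (g k)).
have [x [fx Tx]] := @zadeh_lt u y (Num.max T 0) ltac:(by rewrite le_max lexx orbT) ltac:(rewrite gt_max; apply/andP; split; lra).
have ux0 : level d u 0 x by rewrite level0E; apply: (dclosure_sub Hm); rewrite /=; move: Tx; rewrite gt_max => /andP [].
have [k [kn Uk]] := Hg x ux0.
have := HT k kn T (lexx T) x Uk fx; move: Tx; rewrite gt_max => /andP []; lra.
Qed.

Lemma zadeh_level0 (u : X -> R) : inF d u ->
  level d (zadeh f u) 0 = f @` level d u 0.
Proof.
move=> uF; have ub := inF_bnd uF.
have u1 : forall x, u x <= 1 by move=> x; case/andP: (ub x).
have E : [set y | 0 < zadeh f u y] = f @` [set x | 0 < u x].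
  apply: funext => y; apply: propext; split.
    by move=> /= /(zadeh_lt (lexx 0)) [x [fx ux]]; exists x.
  by case=> x /= ux <-; apply: (lt_le_trans ux); apply: zadeh_ge.
rewrite !level0E E; apply: funext => y; apply: propext; split; last first.
  by move=> Hy; apply: (closure_image fc Hy).
move=> Hy.
have C : dcompact d (f @` level d u 0) by apply: dcompact_image => //; apply: inF_c0.
rewrite -level0E.
have CC := dcompact_closed Hm C; apply: CC.
apply: (dclosure_mono _ Hy) => _ [x ux <-]; exists x => //.
by rewrite level0E; apply: (dclosure_sub Hm).
Qed.

Lemma zadeh_F (u : X -> R) : inF d u -> inF d (zadeh f u).
Proof.
move=> uF; have ub := inF_bnd uF.
split; first exact: zadeh_bnd.
split.
  move=> y t ht; case: (ltrP 1 t) => t1.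
    exists 1; split => // z _; case/andP: (zadeh_bnd ub z) => _ z1; lra.
  have t0 : 0 < t by case/andP: (zadeh_bnd ub y) => y0 _; lra.
  have Ccl : dclosure d (level d (zadeh f u) t) `<=` level d (zadeh f u) t.
    rewrite zadeh_level //; apply: (dcompact_closed Hm); apply: dcompact_image => //.
    by apply: lev_compact => //; rewrite /inI /= (ltW t0).
  have ny : ~ level d (zadeh f u) t y by rewrite levelE //= leNgt ht.
  have [r [r0 Hr]] := closed_not Ccl ny.
  exists r; split => // z /Hr; rewrite levelE //= leNgt => /negP; by rewrite negbK.
split.
  by rewrite zadeh_level0 //; apply: dcompact_image => //; apply: inF_c0.
rewrite zadeh_level ?ltr01 //.
by have [x Hx] := inF_ne1 uF; exists (f x), x.
Qed.

Lemma iter_zadeh_F k (u : X -> R) : inF d u -> inF d (iter k (zadeh f) u).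
Proof. by move=> uF; elim: k => [|k IH] //=; apply: zadeh_F. Qed.

Lemma iter_level k (u : X -> R) a : inF d u -> inI a ->
  level d (iter k (zadeh f) u) a = iter k (image_map f) (level d u a).
Proof.
move=> uF /andP [a0 _]; elim: k => [|k IH] //=.
rewrite /image_map -IH; case: (ltrP 0 a) => a0'.
  by apply: zadeh_level => //; apply: iter_zadeh_F.
have -> : a = 0 by apply/eqP; rewrite eq_le a0 a0'.
by apply: zadeh_level0; apply: iter_zadeh_F.
Qed.

End Zadeh.

Lemma F_eq_levels (u v : X -> R) : (forall x, 0 <= u x <= 1) -> (forall x, 0 <= v x <= 1) ->
  (forall a, 0 < a -> a <= 1 -> level d u a = level d v a) -> u = v.
Proof.
move=> ub vb H; apply: funext => x.
wlog : u v ub vb H / u x <= v x.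
  move=> W; case: (lerP (u x) (v x)) => h; first exact: W.
  by symmetry; apply: W => //; [move=> a a0 a1; rewrite H | exact: ltW h].
move=> le; apply/eqP; rewrite eq_le le /=.
case/andP: (ub x) => u0 _; case/andP: (vb x) => v0 v1.
case: (ltrP 0 (v x)) => v0'; last by apply: (le_trans v0' u0).
have := H (v x) v0' v1; rewrite !levelE // => E.
have h : [set y | v x <= v y] x by rewrite /= lexx.
rewrite -E in h; exact: h.
Qed.

End Fuzzy.


Section Haus.
Variables (R : realType) (T : Type) (dist : T -> T -> R).

Lemma haus_le (A B : set T) (e : R) :
  (forall a, A a -> exists b, B b /\ dist a b < e) ->
  (forall b, B b -> exists a, A a /\ dist a b < e) ->
  (hausdorff dist A B <= e%:E)%E.
Proof.
move=> HA HB; rewrite /hausdorff ge_max; apply/andP; split; apply: ge_ereal_sup.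
  move=> _ [a Aa <-]; have [b [Bb dab]] := HA a Aa.
  apply: (@le_trans _ _ (dist a b)%:E); first by apply: ereal_inf_lbound; exists b.
  by rewrite lee_fin ltW.
move=> _ [b Bb <-]; have [a [Aa dab]] := HB b Bb.
apply: (@le_trans _ _ (dist a b)%:E); first by apply: ereal_inf_lbound; exists a.
by rewrite lee_fin ltW.
Qed.

Lemma haus_lt (A B : set T) (e : R) : (hausdorff dist A B < e%:E)%E ->
  (forall a, A a -> exists b, B b /\ dist a b < e) /\
  (forall b, B b -> exists a, A a /\ dist a b < e).
Proof.
rewrite /hausdorff gt_max => /andP [h1 h2]; split.
  move=> a Aa.
  have : (ereal_inf [set (dist a b)%:E | b in B] < e%:E)%E.
    apply: le_lt_trans h1; apply: ereal_sup_ubound; by exists a.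
  by move=> /ereal_inf_lt [_ [b Bb <-]]; rewrite lte_fin => h; exists b.
move=> b Bb.
have : (ereal_inf [set (dist a b)%:E | a in A] < e%:E)%E.
  apply: le_lt_trans h2; apply: ereal_sup_ubound; by exists b.
by move=> /ereal_inf_lt [_ [a Aa <-]]; rewrite lte_fin => h; exists a.
Qed.

End Haus.

Section Cmp.
Variables (R : realType) (X : Type) (d : X -> X -> R).
Hypothesis Hm : is_metric d.

Definition LC (W V : X -> R) (e : R) := forall a, inI a ->
  (forall x, level d W a x -> exists y, level d V a y /\ d x y < e) /\
  (forall y, level d V a y -> exists x, level d W a x /\ d x y < e).

Lemma dinf_le W V e : LC W V e -> (d_inf d W V <= e%:E)%E.
Proof.
move=> H; apply: ge_ereal_sup => _ [a aI <-].
by have [H1 H2] := H a aI; apply: haus_le.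
Qed.

Lemma homeoI_id : homeoI (fun a : R => a).
Proof.
split; first by [].
split; first by [].
split; first by move=> b bI; exists b.
split; first by move=> a _ e e0; exists e; split.
exists (fun a => a); split; first by [].
by move=> a _ e e0; exists e; split.
Qed.

Lemma d0_le W V e : 0 < e -> LC W V e -> (d_0 d W V <= e%:E)%E.
Proof.
move=> e0 H; apply: ereal_inf_lbound; exists e => //; split => //.
exists (fun a => a); split; first exact: homeoI_id.
split; last exact: dinf_le.
by apply: ge_ereal_sup => _ [a _ <-]; rewrite subrr normr0 lee_fin ltW.
Qed.

Lemma dbar_sym p q : dbar d p q = dbar d q p.
Proof. by rewrite /dbar; congr Num.max; [apply: d_sym | apply: distrC]. Qed.

Lemma sendo_close W V e : (forall x, 0 <= V x) ->
  (forall a, inI a -> forall x, level d W a x -> exists y, level d V a y /\ d x y < e) ->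
  forall p, sendo d W p -> exists q, sendo d V q /\ dbar d p q < e.
Proof.
move=> V0 H [x a] [[/= aI aW] W0].
case: (ltrP 0 a) => a0.
  have [y [Vy dxy]] := H a aI x ltac:(by rewrite levelE).
  exists (y, a); split.
    split; last exact: (lev_sub0 Hm a0 Vy).
    by split => //=; move: Vy; rewrite levelE.
  by rewrite /dbar /= subrr normr0 gt_max dxy /=; apply: le_lt_trans dxy; apply: d_ge0.
have a00 : a = 0 by apply/eqP; rewrite eq_le a0; case/andP: aI.
subst a.
have [y [Vy dxy]] := H 0 aI x W0.
exists (y, 0); split; first by split => //; split => //=.
by rewrite /dbar /= subrr normr0 gt_max dxy /=; apply: le_lt_trans dxy; apply: d_ge0.
Qed.

Lemma endo_close W V e : 0 < e -> (forall x, 0 <= V x) ->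
  (forall a, inI a -> forall x, level d W a x -> exists y, level d V a y /\ d x y < e) ->
  forall p, endo W p -> exists q, endo V q /\ dbar d p q < e.
Proof.
move=> e0 V0 H [x a] [/= aI aW].
case: (ltrP 0 a) => a0.
  have [y [Vy dxy]] := H a aI x ltac:(by rewrite levelE).
  exists (y, a); split; first by split => //=; move: Vy; rewrite levelE.
  by rewrite /dbar /= subrr normr0 gt_max dxy /=; apply: le_lt_trans dxy; apply: d_ge0.
have a00 : a = 0 by apply/eqP; rewrite eq_le a0; case/andP: aI.
subst a.
exists (x, 0); split; first by split => //=.
by rewrite /dbar /= subrr normr0 d_xx // gt_max e0.
Qed.

Lemma LC_sym W V e : LC W V e -> forall a, inI a -> forall y, level d V a y -> exists x, level d W a x /\ d y x < e.
Proof. by move=> H a aI y /(proj2 (H a aI)) [x [Wx dxy]]; exists x; rewrite d_sym. Qed.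

Lemma dS_le W V e : (forall x, 0 <= W x) -> (forall x, 0 <= V x) -> LC W V e -> (d_S d W V <= e%:E)%E.
Proof.
move=> W0 V0 H; apply: haus_le.
  by apply: sendo_close => // a aI; case: (H a aI).
move=> q Sq; have [p [Sp dp]] := sendo_close W0 (LC_sym H) Sq.
by exists p; rewrite dbar_sym.
Qed.

Lemma dE_le W V e : 0 < e -> (forall x, 0 <= W x) -> (forall x, 0 <= V x) -> LC W V e -> (d_E d W V <= e%:E)%E.
Proof.
move=> e0 W0 V0 H; apply: haus_le.
  by apply: endo_close => // a aI; case: (H a aI).
move=> q Sq; have [p [Sp dp]] := endo_close e0 W0 (LC_sym H) Sq.
by exists p; rewrite dbar_sym.
Qed.

End Cmp.


Section Ext.
Variables (R : realType) (X : Type) (d : X -> X -> R).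
Hypothesis Hm : is_metric d.

Lemma half_I : inI (1 / 2 : R). Proof. by rewrite /inI /=; apply/andP; split; lra. Qed.
Lemma one_I : inI (1 : R). Proof. by rewrite /inI /= ler01 lexx. Qed.
Lemma zero_I : inI (0 : R). Proof. by rewrite /inI /= ler01 lexx. Qed.

Lemma ext_key (SW SV : set (X * R)) (W : X -> R) (E : set X) (e : R) : e <= 1 / 4 ->
  (forall x, level d W (1 / 2) x -> SW (x, 1 / 2)) ->
  (forall y b, SV (y, b) -> 0 < b -> E y) ->
  (forall a, E a -> SV (a, 1)) ->
  (forall y b, SW (y, b) -> 1 / 2 <= b -> level d W (1 / 2) y) ->
  (hausdorff (dbar d) SW SV < e%:E)%E ->
  (hausdorff d (level d W (1 / 2)) E <= e%:E)%E.
Proof.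
move=> e4 h1 h2 h3 h4 /haus_lt [H1 H2]; apply: haus_le.
  move=> x Wx; have [[y b] [SVq]] := H1 _ (h1 x Wx).
  rewrite /dbar gt_max /= => /andP [dxy]; rewrite ltr_norml => /andP [b1 b2].
  by exists y; split => //; apply: (h2 y b) => //; lra.
move=> a Ea; have [[y b] [SWp]] := H2 _ (h3 a Ea).
rewrite /dbar gt_max /= => /andP [dxy]; rewrite ltr_norml => /andP [b1 b2].
by exists y; split => //; apply: (h4 y b) => //; lra.
Qed.

Section V.
Variables (V : X -> R) (E : set X).
Hypothesis Vb : forall x, 0 <= V x <= 1.
Hypothesis HV : forall a, inI a -> level d V a = E.

Lemma V1 x : E x -> V x = 1.
Proof.
move=> Ex; have : level d V 1 x by rewrite (HV one_I).
rewrite levelE ?ltr01 //= => h; apply/eqP; rewrite eq_le h andbT; by case/andP: (Vb x).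
Qed.

Lemma V0 x : ~ E x -> V x = 0.
Proof.
move=> nE; case/andP: (Vb x) => v0 v1; apply/eqP; rewrite eq_le v0 andbT.
rewrite leNgt; apply/negP => vp; apply: nE; rewrite -(HV (a := V x)); last by rewrite /inI /= v1 ltW.
by rewrite levelE //=.
Qed.

Lemma Vpos y : 0 < V y -> E y.
Proof. by move=> vp; apply: contrapT => /V0 h; move: vp; rewrite h ltxx. Qed.

Lemma ext_inf W e : (d_inf d W V < e%:E)%E -> (hausdorff d (level d W (1 / 2)) E <= e%:E)%E.
Proof.
move=> h; rewrite -(HV half_I); apply: ltW; apply: le_lt_trans h.
by apply: ereal_sup_ubound; exists (1 / 2) => //; apply: half_I.
Qed.

Lemma homeo0 (xi : R -> R) : homeoI xi -> xi 0 = 0.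
Proof.
case=> mono [II [sur _]].
have [a [aI xa]] := sur 0 zero_I.
case/andP: aI => a0 a1; case: (ltrP 0 a) => ap.
  have := mono 0 a (lexx 0) ap a1; rewrite xa.
  by case/andP: (II 0 zero_I) => h _; lra.
have a00 : a = 0 by apply/eqP; rewrite eq_le ap a0.
by rewrite a00 in xa.
Qed.

Lemma homeo1 (xi : R -> R) : homeoI xi -> xi 1 = 1.
Proof.
case=> mono [II [sur _]].
have [a [aI xa]] := sur 1 one_I.
case/andP: aI => a0 a1; case: (ltrP a 1) => ap.
  have := mono a 1 a0 ap (lexx 1); rewrite xa.
  by case/andP: (II 1 one_I) => _ h; lra.
have a11 : a = 1 by apply/eqP; rewrite eq_le ap a1.
by rewrite a11 in xa.
Qed.

Lemma ext_0 W e : (d_0 d W V < e%:E)%E -> (hausdorff d (level d W (1 / 2)) E <= e%:E)%E.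
Proof.
move=> /ereal_inf_lt [_ [e0 [e0p [xi [hxi [_ hd]]]]] <-]; rewrite lte_fin => e0e.
have L : level d (xi \o V) (1 / 2) = E.
  rewrite levelE; last lra.
  apply: funext => x; apply: propext; split => /=.
    move=> h; apply: contrapT => /V0 h0; move: h; rewrite h0 homeo0 //; lra.
  by move=> /V1 ->; rewrite homeo1 //; lra.
rewrite -L; apply: (@le_trans _ _ e0%:E); last by rewrite lee_fin ltW.
apply: le_trans hd; apply: ereal_sup_ubound; exists (1 / 2) => //; apply: half_I.
Qed.

Lemma ext_S W e : inF d W -> e <= 1 / 4 -> (d_S d W V < e%:E)%E ->
  (hausdorff d (level d W (1 / 2)) E <= e%:E)%E.
Proof.
move=> WF e4; apply: ext_key => //.
- move=> x Wx; split; last by apply: (lev_sub0 Hm _ Wx); lra.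
  by split; [apply: half_I | move: Wx; rewrite levelE //=; lra].
- by move=> y b [[_ /= bV] _] b0; apply: Vpos; lra.
- move=> a Ea; split; last by rewrite (HV zero_I).
  by split; [apply: one_I | rewrite /= V1].
- by move=> y b [[_ /= bW] _] b2; rewrite levelE /=; lra.
Qed.

Lemma ext_E W e : e <= 1 / 4 -> (d_E d W V < e%:E)%E ->
  (hausdorff d (level d W (1 / 2)) E <= e%:E)%E.
Proof.
move=> e4; apply: ext_key => //.
- by move=> x Wx; split; [apply: half_I | move: Wx; rewrite levelE //=; lra].
- by move=> y b [_ /= bV] b0; apply: Vpos; lra.
- by move=> a Ea; split; [apply: one_I | rewrite /= V1].
- by move=> y b [_ /= bW] b2; rewrite levelE /=; lra.
Qed.

End V.
End Ext.


Section HB.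
Variable R : realType.

Lemma heine_borel (lo hi : R -> R) :
  (forall a, inI a -> lo a < a < hi a) ->
  exists L : seq R, (forall a, a \in L -> inI a) /\
    forall b, inI b -> exists a, a \in L /\ lo a < b < hi a.
Proof.
move=> Hl.
pose S := [set t : R | 0 <= t <= 1 /\ exists L : seq R, (forall a, a \in L -> inI a) /\
    forall b, 0 <= b <= t -> exists a, a \in L /\ lo a < b < hi a].
have S0 : S 0.
  split; first by rewrite lexx ler01.
  exists [:: 0]; split; first by move=> a; rewrite inE => /eqP ->; apply: zero_I.
  move=> b /andP [b0 b1]; have -> : b = 0 by apply/eqP; rewrite eq_le b0 b1.
  by exists 0; rewrite inE eqxx; split => //; apply: Hl; apply: zero_I.
have Sub : ubound S 1 by move=> t [/andP [_ t1] _].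
have hs : has_sup S by split; [exists 0 | exists 1].
set c := sup S.
have c0 : 0 <= c by apply: sup_upper_bound.
have c1 : c <= 1 by apply: ge_sup => //; exists 0.
have cI : inI c by rewrite /inI /= c0 c1.
have /andP [loc hic] := Hl c cI.
have [t St tc] := sup_adherent (eps := c - lo c) ltac:(by rewrite subr_gt0) hs.
rewrite -/c in tc.
have tlec : t <= c by apply: sup_upper_bound.
case: St => /andP [t0 t1] [L [LI HL]].
pose t' := Num.min 1 ((c + hi c) / 2).
have St' : S t'.
  split.
    apply/andP; split; last by rewrite ge_min lexx.
    by rewrite le_min ler01 /=; lra.
  exists (c :: L); split.
    by move=> a; rewrite inE => /orP [/eqP ->|/LI].
  move=> b /andP [b0 bt']; case: (lerP b t) => bt.
    have [a [aL Ha]] := HL b ltac:(by rewrite b0 bt).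
    by exists a; rewrite inE aL orbT.
  exists c; rewrite inE eqxx; split => //.
  move: bt'; rewrite le_min => /andP [_ h].
  apply/andP; split; lra.
have t'c : t' <= c by apply: sup_upper_bound.
have t'1 : t' = 1.
  apply/eqP; rewrite eq_le ge_min lexx /=.
  case: (lerP 1 ((c + hi c) / 2)) => h; first by rewrite le_min lexx h.
  have : (c + hi c) / 2 <= t' by rewrite le_min lexx (ltW h).
  lra.
case: St' => _ [L' [L'I HL']].
exists L'; split => // b /andP [b0 b1].
by apply: HL'; rewrite t'1 b0 b1.
Qed.

End HB.

Section Grid.
Variables (R : realType) (X : Type) (d : X -> X -> R).
Hypothesis Hm : is_metric d.

Definition Good (w : X -> R) (e : R) (G : seq R) := forall a, inI a -> forall x, level d w a x ->
  exists g, g \in G /\ a <= g /\ exists y, level d w g y /\ d x y < e.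
Definition okG (G : seq R) := forall g, g \in G -> 0 < g /\ g <= 1.

Variables (w : X -> R) (e : R).
Hypothesis wF : inF d w.
Hypothesis e0 : 0 < e.

Lemma ball_good_open (P : X -> R -> Prop) : forall p : X * R,
  dopen d [set v | 0 < p.2 /\ P p.1 p.2 /\ d p.1 v < p.2].
Proof.
move=> [z r] v [/= r0 [gd dz]]; exists (r - d z v); split; first by rewrite subr_gt0.
move=> u du; split => //; split => //=; have := d_tri Hm z v u; lra.
Qed.


Lemma locL a : 0 < a -> a <= 1 -> exists T, 0 <= T /\ T < a /\
  forall b, T < b -> b <= a -> forall x, level d w b x -> exists y, level d w a y /\ d x y < e.
Proof.
move=> a0 a1.
pose g1 := fun (z : X) (r : R) => w z < a /\ forall v, d z v < r -> w v < (w z + a) / 2.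
pose g2 := fun (z : X) (r : R) => exists y, level d w a y /\ d z y < e - r.
pose U := fun p : X * R => [set v | 0 < p.2 /\ (g1 p.1 p.2 \/ g2 p.1 p.2) /\ d p.1 v < p.2].
have Uo : forall p, dopen d (U p) by move=> p; rewrite /U; exact: (@ball_good_open (fun z r => g1 z r \/ g2 z r) p).
have cov : forall x, level d w 0 x -> exists p, U p x.
  move=> x _; case: (EM (exists y, level d w a y /\ d x y < e)) => [[y [ya dy]]|nex].
    exists (x, (e - d x y) / 2); split; first by rewrite /=; lra.
    by split; [right; exists y; split => //=; lra | rewrite /= d_xx //; lra].
  have wxa : w x < a.
    rewrite ltNge; apply/negP => ax; apply: nex; exists x; split; first by rewrite levelE.
    by rewrite d_xx.
  have uu := inF_usc wF; have [r [r0 Hr]] := uu x ((w x + a) / 2) ltac:(lra).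
  by exists (x, r); split => //; split; [left | rewrite /= d_xx].
have [n [g Hg]] := inF_c0 wF Uo cov.
have loc : forall p, exists t, t < a /\ forall t', t <= t' -> forall v, U p v ->
    (exists y, level d w a y /\ d v y < e) \/ w v < t'.
  move=> [z r]; case: (EM (g1 z r)) => G1.
    exists ((w z + a) / 2); split; first by case: G1; lra.
    move=> t' ht v /= [r0 [_ dz]]; right; case: G1 => _ /(_ v dz); lra.
  exists 0; split => // t' _ v /= [r0 [[//|[y [ya dy]]] dz]]; left; exists y; split => //.
  have := d_tri Hm v z y; have := d_sym Hm z v; lra.
have [T [Ta HT]] := @fin_max R n a (fun k t => forall v, U (g k) v ->
    (exists y, level d w a y /\ d v y < e) \/ w v < t) (fun k _ => loc (g k)).
exists (Num.max T 0); split; first by rewrite le_max lexx orbT.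
split; first by rewrite gt_max Ta a0.
move=> b Tb ba x xb.
have b0 : 0 < b by move: Tb; rewrite gt_max => /andP [].
have xw0 : level d w 0 x by apply: (lev_sub0 Hm b0 xb).
have [k [kn Uk]] := Hg x xw0.
case: (HT k kn (Num.max T 0) ltac:(by rewrite le_max lexx) x Uk) => // h.
move: xb; rewrite levelE //= => h2; lra.
Qed.

Lemma locR a : 0 <= a -> a < 1 -> exists c, a < c /\ c <= 1 /\
  forall x, level d w 0 x -> ~ (exists r, 0 < r /\ forall v, d x v < r -> w v <= a) ->
  exists y, level d w c y /\ d x y < e.
Proof.
move=> a0 a1.
pose g1 := fun (z : X) (r : R) => a < w z /\ r <= e.
pose g2 := fun (z : X) (r : R) => forall v, d z v < r -> w v <= a.
pose U := fun p : X * R => [set v | 0 < p.2 /\ (g1 p.1 p.2 \/ g2 p.1 p.2) /\ d p.1 v < p.2].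
have Uo : forall p, dopen d (U p).
  by move=> p; rewrite /U; exact: (@ball_good_open (fun z r => g1 z r \/ g2 z r) p).
have cov : forall x, level d w 0 x -> exists p, U p x.
  move=> x _; case: (EM (exists r, 0 < r /\ forall v, d x v < r -> w v <= a)) => [[r [r0 Hr]]|nO].
    by exists (x, r); split => //; split; [right | rewrite /= d_xx].
  have [v [dv av]] : exists v, d x v < e /\ a < w v.
    apply: contrapT => H; apply: nO; exists e; split => // v dv.
    rewrite leNgt; apply/negP => av; apply: H; by exists v.
  exists (v, e); split => //; split; first by left; split => //=.
  by rewrite /= d_sym.
have [n [g Hg]] := inF_c0 wF Uo cov.
have loc : forall p, exists r, 0 < r /\ forall r', 0 < r' -> r' <= r -> g1 p.1 p.2 -> a + r' <= w p.1.
  move=> [z r]; case: (EM (g1 z r)) => G1.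
    exists (w z - a); split; first by case: G1 => h _; lra.
    by move=> r' _ h _ /=; lra.
  by exists 1; split => // r' _ _ /G1.
have [m [m0 Hmin]] := @fin_min R n (fun k r => g1 (g k).1 (g k).2 -> a + r <= w (g k).1)
  (fun k _ => loc (g k)).
exists (Num.min (a + m) 1); split; first by rewrite lt_min a1 andbT; lra.
split; first by rewrite ge_min lexx orbT.
move=> x xw0 nO.
have [k [kn Uk]] := Hg x xw0.
have Qk := Hmin k kn m m0 (lexx m).
move: Uk Qk; case: (g k) => z r /= [r0 [[G1|G2] dz]] Qk.
  exists z; split.
    rewrite levelE; last by rewrite lt_min ltr01 andbT; lra.
    by rewrite /= ge_min Qk.
  by case: G1 => _ h; have := d_sym Hm z x; lra.
exfalso; apply: nO; exists (r - d z x); split; first by rewrite subr_gt0.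
move=> v dv; apply: G2; simpl in dz |- *; have := d_tri Hm z x v; lra.
Qed.

Lemma lvl0_of b x : inI b -> level d w b x -> level d w 0 x.
Proof.
case/andP=> b0 _; case: (ltrP 0 b) => bp; first exact: (lev_sub0 Hm bp).
by have -> : b = 0 by apply/eqP; rewrite eq_le b0 bp.
Qed.

Lemma nO_of a b x : 0 <= a -> a <= b -> (a < b \/ b = 0) -> level d w b x ->
  ~ (exists r, 0 < r /\ forall v, d x v < r -> w v <= a).
Proof.
move=> a0 ab [ab'|b0] xb [r [r0 Hr]].
  have := Hr x ltac:(by rewrite d_xx); move: xb; rewrite levelE /=; [lra|lra].
subst b; have a00 : a = 0 by apply/eqP; rewrite eq_le a0 ab.
subst a; move: xb; rewrite level0E => /(_ r r0) [v [/= wv dv]].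
by have := Hr v dv; lra.
Qed.

Lemma locAll a : inI a -> exists lo hi G, lo < a < hi /\ okG G /\
  forall b, inI b -> lo < b < hi -> forall x, level d w b x ->
    exists g, g \in G /\ b <= g /\ exists y, level d w g y /\ d x y < e.
Proof.
move=> aI; have /andP [a0 a1] := aI.
case: (ltrP 0 a) => ap; last first.
  have a00 : a = 0 by apply/eqP; rewrite eq_le a0 ap.
  subst a; have [c [c0 [c1 Hc]]] := locR (lexx 0) ltr01.
  exists (-1), c, [:: c]; split; first by rewrite c0; lra.
  split; first by move=> g; rewrite inE => /eqP ->.
  move=> b bI /andP [_ bc] x xb; exists c; rewrite inE eqxx; split => //; split; first exact: ltW.
  apply: Hc; first exact: (lvl0_of bI xb).
  case/andP: bI => b0 _; apply: (nO_of (lexx 0) b0 _ xb).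
  case: (ltrP 0 b) => bp; [by left | right; apply/eqP; by rewrite eq_le b0 bp].
case: (ltrP a 1) => a1'.
  have [T [T0 [Ta HT]]] := locL ap a1.
  have [c [ac [c1 Hc]]] := locR a0 a1'.
  exists T, c, [:: a; c]; split; first by rewrite Ta ac.
  split; first by move=> g; rewrite !inE => /orP [/eqP ->|/eqP ->]; split => //; lra.
  move=> b bI /andP [Tb bc] x xb; case: (lerP b a) => ba.
    have [y [ya dy]] := HT b Tb ba x xb.
    by exists a; rewrite inE eqxx; split => //; split => //; exists y.
  have [y [yc dy]] := Hc x (lvl0_of bI xb) (nO_of a0 (ltW ba) (or_introl ba) xb).
  by exists c; rewrite !inE eqxx orbT; split => //; split; [exact: ltW | exists y].
have a11 : a = 1 by apply/eqP; rewrite eq_le a1 a1'.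
subst a; have [T [T0 [Ta HT]]] := locL ltr01 (lexx 1).
exists T, 2, [:: 1]; split; first by rewrite Ta /=; lra.
split; first by move=> g; rewrite inE => /eqP ->; split => //; lra.
move=> b /andP [b0 b1] /andP [Tb _] x xb.
have [y [ya dy]] := HT b Tb b1 x xb.
by exists 1; rewrite inE eqxx; split => //; split => //; exists y.
Qed.

Lemma grid_one : exists G, okG G /\ Good w e G.
Proof.
have H : forall a, exists p : R * R * seq R, inI a -> p.1.1 < a < p.1.2 /\ okG p.2 /\
  forall b, inI b -> p.1.1 < b < p.1.2 -> forall x, level d w b x ->
    exists g, g \in p.2 /\ b <= g /\ exists y, level d w g y /\ d x y < e.
  move=> a; case: (EM (inI a)) => aI; last by exists (0, 0, [::]).
  by have [lo [hi [G HG]]] := locAll aI; exists (lo, hi, G).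
have [F HF] := choice H.
have [L [LI HL]] := @heine_borel R (fun a => (F a).1.1) (fun a => (F a).1.2)
  (fun a aI => proj1 (HF a aI)).
exists (flatten [seq (F a).2 | a <- L]); split.
  move=> g /flatten_mapP [a aL ga].
  by have [_ [ok _]] := HF a (LI a aL); apply: ok.
move=> b bI x xb.
have [a [aL Hab]] := HL b bI.
have [_ [_ cov]] := HF a (LI a aL).
have [g [gG [bg Hy]]] := cov b bI Hab x xb.
exists g; split => //; apply/flatten_mapP; by exists a.
Qed.

End Grid.

Section GridFam.
Variables (R : realType) (X : Type) (d : X -> X -> R).
Hypothesis Hm : is_metric d.

Lemma Good_mono (w : X -> R) e G G' : Good d w e G -> {subset G <= G'} -> Good d w e G'.
Proof.
move=> HG sub a aI x xa; have [g [gG rest]] := HG a aI x xa.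
by exists g; split => //; apply: sub.
Qed.

Lemma grid_fam (e : R) (n : nat) (W : nat -> X -> R) : 0 < e ->
  (forall k, (k < n)%N -> inF d (W k)) ->
  exists G, okG G /\ 1 \in G /\ forall k, (k < n)%N -> Good d (W k) e G.
Proof.
move=> e0; elim: n => [|n IH] HW.
  exists [:: 1]; split; last by rewrite inE eqxx.
  by move=> g; rewrite inE => /eqP ->; split => //; apply: ltr01.
have [G [okGG [G1 HG]]] := IH (fun k kn => HW k (leqW kn)).
have [G' [okG' HG']] := grid_one Hm (HW n (ltnSn n)) e0.
exists (G ++ G'); split.
  by move=> g; rewrite mem_cat => /orP [/okGG|/okG'].
split; first by rewrite mem_cat G1.
move=> k; rewrite ltnS leq_eqVlt => /orP [/eqP ->|kn].
  by apply: (Good_mono HG') => g; rewrite mem_cat => ->; rewrite orbT.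
by apply: (Good_mono (HG k kn)) => g; rewrite mem_cat => ->.
Qed.

Lemma grid_fam2 (e : R) (s : nat) (m : nat -> nat) (W : nat -> nat -> X -> R) : 0 < e ->
  (forall r k, (r < s)%N -> (k <= m r)%N -> inF d (W r k)) ->
  exists G, okG G /\ 1 \in G /\ forall r k, (r < s)%N -> (k <= m r)%N -> Good d (W r k) e G.
Proof.
move=> e0; elim: s => [|s IH] HW.
  exists [:: 1]; split; last by rewrite inE eqxx.
  by move=> g; rewrite inE => /eqP ->; split => //; apply: ltr01.
have [G [okGG [G1 HG]]] := IH (fun r k rs km => HW r k (leqW rs) km).
have [G' [okG' [G'1 HG']]] := @grid_fam e (m s).+1 (W s) e0 (fun k km => HW s k (ltnSn s) km).
exists (G ++ G'); split.
  by move=> g; rewrite mem_cat => /orP [/okGG|/okG'].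
split; first by rewrite mem_cat G1.
move=> r k; rewrite ltnS leq_eqVlt => /orP [/eqP ->|rs] km.
  by apply: (Good_mono (HG' k km)) => g; rewrite mem_cat => ->; rewrite orbT.
by apply: (Good_mono (HG r k rs km)) => g; rewrite mem_cat => ->.
Qed.

End GridFam.


Section ListMin.
Variable R : realType.
Lemma list_min (G : seq R) (Q : R -> R -> Prop) :
  (forall g, g \in G -> exists r, 0 < r /\ forall r', 0 < r' -> r' <= r -> Q g r') ->
  exists m, 0 < m /\ forall g, g \in G -> forall r', 0 < r' -> r' <= m -> Q g r'.
Proof.
elim: G => [|a G IH] H; first by exists 1; split => // g; rewrite in_nil.
have [m [m0 Hm]] := IH (fun g gG => H g ltac:(by rewrite in_cons gG orbT)).
have [r [r0 Hr]] := H a ltac:(by rewrite in_cons eqxx).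
exists (Num.min m r); split; first by rewrite lt_min m0 r0.
move=> g; rewrite in_cons => /orP [/eqP ->|gG] r' r'0; rewrite le_min => /andP [h1 h2].
  by apply: Hr.
by apply: Hm.
Qed.
End ListMin.

Section Umax.
Variables (R : realType) (X : Type) (d : X -> X -> R).
Hypothesis Hm : is_metric d.

Definition umax (G : seq R) (C : R -> set X) (x : X) : R :=
  foldr (fun g acc => if `[< C g x >] then Num.max g acc else acc) 0 G.

Variables (G : seq R) (C : R -> set X).
Hypothesis okGG : okG G.
Hypothesis G1 : 1 \in G.
Hypothesis CK : forall g, g \in G -> inK d (C g).

Lemma umax_ge0 x : 0 <= umax G C x.
Proof.
rewrite /umax; elim: G => [|g s IH] //=.
by case: asboolP => _ //; rewrite le_max IH orbT.
Qed.

Lemma umax_level a x : 0 < a -> (a <= umax G C x <-> exists g, g \in G /\ a <= g /\ C g x).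
Proof.
move=> a0; rewrite /umax; elim: G => [|g s IH] /=.
  by split; [lra | case=> g []; rewrite in_nil].
case: asboolP => Cg.
  rewrite le_max; split.
    case/orP => [ag|/IH [h [hs [ah Ch]]]]; first by exists g; rewrite in_cons eqxx.
    by exists h; rewrite in_cons hs orbT.
  case=> h [/[!in_cons] /orP [/eqP ->|hs] [ah Ch]]; first by rewrite ah.
  by apply/orP; right; apply/IH; exists h.
rewrite IH; split; case=> h [hG [ah Ch]].
  by exists h; rewrite in_cons hG orbT.
move: hG; rewrite in_cons => /orP [/eqP hg|hs]; first by subst h.
by exists h.
Qed.

Lemma umax_le1 x : umax G C x <= 1.
Proof.
case: (ltrP 0 (umax G C x)) => h; last by apply: (le_trans h); apply: ler01.
have [g [gG [ug _]]] := (umax_level x h).1 (lexx _).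
by apply: (le_trans ug); have [] := okGG gG.
Qed.

Lemma umax_pos x : 0 < umax G C x <-> exists g, g \in G /\ C g x.
Proof.
split.
  move=> h; have [g [gG [_ Cg]]] := (umax_level x h).1 (lexx _); by exists g.
case=> g [gG Cg]; have [g0 _] := okGG gG.
apply: (lt_le_trans g0); apply/(umax_level x g0); by exists g; split => //.
Qed.

Lemma BU_compact a : inI a -> dcompact d (BU G (fun g => a <= g) C).
Proof.
case/andP=> _ a1; apply: compact_BU; first by exists 1.
by move=> g gG _; case: (CK gG).
Qed.

Lemma umax_levelE a : inI a -> level d (umax G C) a = BU G (fun g => a <= g) C.
Proof.
move=> aI; case: (ltrP 0 a) => a0.
  rewrite levelE //; apply: funext => x; apply: propext; exact: umax_level.
have a00 : a = 0 by apply/eqP; rewrite eq_le a0; case/andP: aI.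
subst a; rewrite level0E.
have E : [set x | 0 < umax G C x] = BU G (fun g => 0 <= g) C.
  apply: funext => x; apply: propext; split => /=.
    by move=> /umax_pos [g [gG Cg]]; exists g; split => //; split => //; case: (okGG gG) => h _; apply: ltW.
  by case=> g [gG [_ Cg]]; apply/umax_pos; exists g.
rewrite E; apply: funext => x; apply: propext; split; last by apply: (dclosure_sub Hm).
by apply: (dcompact_closed Hm); apply: BU_compact; apply: zero_I.
Qed.

Lemma umax_F : inF d (umax G C).
Proof.
split; first by move=> x; rewrite umax_ge0 umax_le1.
split.
  move=> x t ht.
  have t0 : 0 < t by apply: le_lt_trans ht; apply: umax_ge0.
  have loc : forall g, g \in G -> exists r, 0 < r /\ forall r', 0 < r' -> r' <= r ->
      t <= g -> forall v, d x v < r' -> ~ C g v.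
    move=> g gG; case: (EM (t <= g)) => tg; last by exists 1; split => // r' _ _ /tg.
    have nC : ~ C g x.
      move=> Cg; move: ht; rewrite ltNge => /negP; apply.
      by apply/(umax_level x t0); exists g.
    have Ccl : dclosure d (C g) `<=` C g by apply: (dcompact_closed Hm); case: (CK gG).
    have [r [r0 Hr]] := closed_not Ccl nC.
    by exists r; split => // r' r'0 r'r _ v dv; apply: Hr; lra.
  have [m [m0 Hmin]] := @list_min R G (fun g r => t <= g -> forall v, d x v < r -> ~ C g v) loc.
  exists m; split => // v dv; rewrite ltNge; apply/negP => /(umax_level v t0) [g [gG [tg Cg]]].
  exact: (Hmin g gG m m0 (lexx m) tg v dv Cg).
split; first by rewrite umax_levelE; [exact: (BU_compact (zero_I R)) | exact: zero_I].
rewrite umax_levelE; last exact: one_I.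
have [[c Cc] _] := CK G1.
by exists c, 1; split => //.
Qed.

Lemma iter_image_BU k (f : X -> X) (P : R -> Prop) :
  iter k (image_map f) (BU G P C) = BU G P (fun g => iter k (image_map f) (C g)).
Proof.
elim: k => [|k IH] //=; rewrite IH /image_map.
apply: funext => y; apply: propext; split.
  by case=> x [g [gG [Pg Cx]]] <-; exists g; split => //; split => //; exists x.
by case=> g [gG [Pg [x Cx <-]]]; exists x => //; exists g.
Qed.

End Umax.


Section KF.
Variables (R : realType) (X : Type) (d : X -> X -> R).
Hypothesis Hm : is_metric d.
Variable f : X -> X.
Hypothesis fc : dcontinuous d f.

Lemma K_to_F (rho : (X -> R) -> (X -> R) -> \bar R) :
  (forall W V, inF d W -> inF d V -> forall e, 0 < e -> LC d W V e -> (rho W V <= e%:E)%E) ->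
  spec_prop (inK d) (hausdorff d) (image_map f) -> spec_prop (inF d) rho (zadeh f).
Proof.
move=> Hrho HK eps eps0.
have e10 : 0 < eps / 4 by lra.
have [N HN] := HK (eps / 4) e10.
exists N => s v i j s2 Pv i0 ij gaps.
have WF : forall r k, (r < s)%N -> (k <= j r)%N -> inF d (iter k (zadeh f) (v r)).
  by move=> r k rs _; apply: (iter_zadeh_F Hm fc); apply: Pv.
have [G [okGG [G1 HG]]] := @grid_fam2 R X d Hm (eps / 4) s j
   (fun r k => iter k (zadeh f) (v r)) e10 WF.
have HC : forall g, exists Cg : set X, g \in G -> inK d Cg /\
   (forall r k, (r < s)%N -> (i r <= k <= j r)%N ->
     (hausdorff d (iter k (image_map f) Cg) (iter k (image_map f) (level d (v r) g)) < (eps / 4)%:E)%E) /\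
   iter (N + j s.-1) (image_map f) Cg = Cg.
  move=> g; case: (EM (g \in G)) => gG; last by exists set0.
  have gI : inI g by case: (okGG g gG) => g0 g1; rewrite /inI /= g1 ltW.
  have [x [Px [Hx Hp]]] := HN s (fun r => level d (v r) g) i j s2
    (fun r rs => conj (lev_ne Hm (Pv r rs) gI) (lev_compact Hm (Pv r rs) gI)) i0 ij gaps.
  by exists x.
have [C HCf] := choice HC.
have CK : forall g, g \in G -> inK d (C g) by move=> g gG; case: (HCf g gG).
have uF : inF d (umax G C) := umax_F Hm okGG G1 CK.
exists (umax G C); split => //; split.
  move=> r k rs /andP [ik kj].
  have kjr : (k <= j r)%N by [].
  have LCp : LC d (iter k (zadeh f) (umax G C)) (iter k (zadeh f) (v r)) (eps / 2).
    move=> a aI.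
    rewrite (iter_level Hm fc k uF aI) (umax_levelE Hm okGG G1 CK aI) iter_image_BU.
    rewrite (iter_level Hm fc k (Pv r rs) aI).
    split.
      move=> x [g [gG [ag Cx]]].
      have [_ [Hh _]] := HCf g gG.
      have [H1 _] := haus_lt (Hh r k rs ltac:(by rewrite ik kj)).
      have [y [yl dy]] := H1 x Cx.
      exists y; split; last lra.
      have gI : inI g by case: (okGG g gG) => g0 g1; rewrite /inI /= g1 ltW.
      rewrite -(iter_level Hm fc k (Pv r rs) aI) -(iter_level Hm fc k (Pv r rs) gI) in yl *.
      by apply: (lev_mono Hm _ ag yl); case/andP: aI.
    move=> y yl.
    have [g [gG [ag [y' [y'l dy']]]]] := HG r k rs kjr a aI y
      ltac:(by rewrite (iter_level Hm fc k (Pv r rs) aI)).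
    have gI : inI g by case: (okGG g gG) => g0 g1; rewrite /inI /= g1 ltW.
    rewrite (iter_level Hm fc k (Pv r rs) gI) in y'l.
    have [_ [Hh _]] := HCf g gG.
    have [_ H2] := haus_lt (Hh r k rs ltac:(by rewrite ik kj)).
    have [x [Cx dx]] := H2 y' y'l.
    exists x; split; first by exists g.
    have := d_tri Hm x y' y; have := d_sym Hm y y'; lra.
  apply: (le_lt_trans (Hrho _ _ (iter_zadeh_F Hm fc k uF) (WF r k rs kjr) (eps / 2) ltac:(lra) LCp)).
  rewrite lte_fin; lra.
apply: (@F_eq_levels R X d).
- exact: (inF_bnd (iter_zadeh_F Hm fc _ uF)).
- exact: (inF_bnd uF).
move=> a a0 a1.
have aI : inI a by rewrite /inI /= a1 ltW.
rewrite (iter_level Hm fc _ uF aI) (umax_levelE Hm okGG G1 CK aI) iter_image_BU.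
apply: funext => x; apply: propext; split.
  by case=> g [gG [ag Cx]]; exists g; split => //; split => //; move: Cx; rewrite (proj2 (proj2 (HCf g gG))).
by case=> g [gG [ag Cx]]; exists g; split => //; split => //; rewrite (proj2 (proj2 (HCf g gG))).
Qed.

End KF.


Section FK.
Variables (R : realType) (X : Type) (d : X -> X -> R).
Hypothesis Hm : is_metric d.
Variable f : X -> X.
Hypothesis fc : dcontinuous d f.

Definition chi (A : set X) : X -> R := fun x => if `[< A x >] then 1 else 0.

Lemma chi_bnd A x : 0 <= chi A x <= 1.
Proof. by rewrite /chi; case: asboolP => _; rewrite ?lexx ?ler01. Qed.

Lemma chi_level A a : inK d A -> inI a -> level d (chi A) a = A.
Proof.
move=> [_ AK] /andP [a0 a1]; case: (ltrP 0 a) => ap.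
  rewrite levelE //; apply: funext => x; apply: propext; rewrite /chi /=.
  by case: asboolP => Ax; split => // h; lra.
have -> : a = 0 by apply/eqP; rewrite eq_le a0 ap.
rewrite level0E.
have -> : [set x | 0 < chi A x] = A.
  apply: funext => x; apply: propext; rewrite /chi /=.
  by case: asboolP => Ax; split => // h; lra.
apply: funext => x; apply: propext; split; last by apply: (dclosure_sub Hm).
exact: (dcompact_closed Hm AK).
Qed.

Lemma chi_F A : inK d A -> inF d (chi A).
Proof.
move=> AK; split; first exact: chi_bnd.
split.
  move=> x t ht; case: (EM (A x)) => Ax.
    exists 1; split => // v _; move: ht; rewrite /chi; case: asboolP => // _.
    by case: asboolP => _; lra.
  have Ccl : dclosure d A `<=` A by apply: (dcompact_closed Hm); case: AK.
  have [r [r0 Hr]] := closed_not Ccl Ax.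
  exists r; split => // v /Hr nA; move: ht; rewrite /chi.
  by case: asboolP => // _; case: asboolP.
split; first by rewrite chi_level //; [case: AK | apply: zero_I].
by rewrite chi_level //; [case: AK | apply: one_I].
Qed.

Lemma F_to_K (rho : (X -> R) -> (X -> R) -> \bar R) :
  (forall W V (E : set X) e, inF d W -> inF d V -> (forall a, inI a -> level d V a = E) ->
     0 < e -> e <= 1 / 4 -> (rho W V < e%:E)%E -> (hausdorff d (level d W (1 / 2)) E <= e%:E)%E) ->
  spec_prop (inF d) rho (zadeh f) -> spec_prop (inK d) (hausdorff d) (image_map f).
Proof.
move=> Hrho HF eps eps0.
pose e2 := Num.min (eps / 2) (1 / 4).
have e20 : 0 < e2 by rewrite lt_min; apply/andP; split; lra.
have e24 : e2 <= 1 / 4 by rewrite ge_min lexx orbT.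
have e2e : e2 < eps by apply: (le_lt_trans (y := eps / 2)); [rewrite ge_min lexx | lra].
have [N HN] := HF e2 e20.
exists N => s A i j s2 PA i0 ij gaps.
have [u [uF [Ht Hp]]] := HN s (fun r => chi (A r)) i j s2 (fun r rs => chi_F (PA r rs)) i0 ij gaps.
exists (level d u (1 / 2)); split.
  split; first by apply: (lev_ne Hm uF); apply: half_I.
  exact: (lev_compact Hm uF (half_I R)).
split.
  move=> r k rs kk.
  rewrite -(iter_level Hm fc k uF (half_I R)).
  have HV : forall a, inI a -> level d (iter k (zadeh f) (chi (A r))) a = iter k (image_map f) (A r).
    move=> a aI; rewrite (iter_level Hm fc k (chi_F (PA r rs)) aI).
    by rewrite (chi_level (PA r rs) aI).
  apply: (le_lt_trans (Hrho _ _ _ e2 (iter_zadeh_F Hm fc k uF) (iter_zadeh_F Hm fc k (chi_F (PA r rs))) HV e20 e24 (Ht r k rs kk))).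
  by rewrite lte_fin.
by rewrite -(iter_level Hm fc _ uF (half_I R)) Hp.
Qed.

End FK.

Theorem main_thm (R : realType) (X : Type) (d : X -> X -> R) (f : X -> X) :
  is_metric d -> dcontinuous d f ->
  [/\ spec_prop (inK d) (hausdorff d) (image_map f) <->
        spec_prop (inF d) (d_inf d) (zadeh f),
      spec_prop (inK d) (hausdorff d) (image_map f) <->
        spec_prop (inF d) (d_0 d) (zadeh f),
      spec_prop (inK d) (hausdorff d) (image_map f) <->
        spec_prop (inF d) (d_S d) (zadeh f)
    & spec_prop (inK d) (hausdorff d) (image_map f) <->
        spec_prop (inF d) (d_E d) (zadeh f)].
Proof.
move=> Hm fc; split; split.
- apply: (K_to_F Hm fc) => W V _ _ e _; exact: dinf_le.
- apply: (F_to_K Hm fc) => W V E e _ VF HV _ _; exact: (ext_inf HV).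
- apply: (K_to_F Hm fc) => W V _ _ e e0; exact: d0_le.
- apply: (F_to_K Hm fc) => W V E e _ VF HV _ _; exact: (ext_0 (inF_bnd VF) HV).
- apply: (K_to_F Hm fc) => W V WF VF e _; apply: (dS_le Hm).
  + by move=> x; case/andP: (inF_bnd WF x).
  + by move=> x; case/andP: (inF_bnd VF x).
- apply: (F_to_K Hm fc) => W V E e WF VF HV _ e4; exact: (ext_S Hm (inF_bnd VF) HV WF e4).
- apply: (K_to_F Hm fc) => W V WF VF e e0; apply: (dE_le Hm e0).
  + by move=> x; case/andP: (inF_bnd WF x).
  + by move=> x; case/andP: (inF_bnd VF x).
- apply: (F_to_K Hm fc) => W V E e _ VF HV _ e4; exact: (ext_E (inF_bnd VF) HV e4).
Qed.

Theorem theorem4p3 (R : realType) (X : Type) (d : X -> X -> R) (f : X -> X) :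
  is_metric d -> dcontinuous d f ->
  [/\ spec_prop (inK d) (hausdorff d) (image_map f) <->
        spec_prop (inF d) (d_inf d) (zadeh f),
      spec_prop (inK d) (hausdorff d) (image_map f) <->
        spec_prop (inF d) (d_0 d) (zadeh f),
      spec_prop (inK d) (hausdorff d) (image_map f) <->
        spec_prop (inF d) (d_S d) (zadeh f)
    & spec_prop (inK d) (hausdorff d) (image_map f) <->
        spec_prop (inF d) (d_E d) (zadeh f)].
Proof. exact: main_thm. Qed.
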